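(* Let $\lambda=[\lambda_1,\ldots,\lambda_s]$ and $\mu=[\mu_1,\ldots,\mu_t]$ be integral partitions such that $\lambda_i\mid\lambda_j$ whenever $i\ge j$. Suppose $\lambda\hookrightarrow\mu$. Then the first fit procedure always succeeds: if one processes $\lambda_1,\lambda_2,\ldots,\lambda_s$ in this order and places each $\lambda_i$ into any bin $j$ whose remaining capacity (namely $\mu_j$ minus the sum of the $\lambda$'s already placed in bin $j$) is at least $\lambda_i$, then, whatever such choices are made, at each step there exists a bin with remaining capacity at least the current $\lambda_i$, so all of $\lambda$ gets placed. Equivalently: for every $k$ with $\lambda_1\le\mu_k$, the sequence $[\lambda_2,\ldots,\lambda_s]$ embeds into the sequence of capacities obtained from $\mu$ by replacing $\mu_k$ with $\mu_k-\lambda_1$.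
   Context: An integral partition is a finite nonincreasing sequence of positive integers. $\lambda=[\lambda_1,\ldots,\lambda_m]$ embeds into a sequence of nonnegative integer capacities $\mu=[\mu_1,\ldots,\mu_n]$, written $\lambda\hookrightarrow\mu$, if there is a map $\varphi:\{1,\ldots,m\}\to\{1,\ldots,n\}$ with $\sum_{i\in\varphi^{-1}(j)}\lambda_i\le\mu_j$ for all $j$. *)

(* Defs.v *)
(* Partitions and capacity sequences are [seq nat];
   indices are 0-based (paper's lambda_i is [nth 0 lam (i-1)]). *)
From mathcomp Require Import all_boot.
Set Implicit Arguments. Unset Strict Implicit. Unset Printing Implicit Defensive.

Definition is_partition (l : seq nat) : bool :=
  sorted geq l && all (fun x => 0 < x) l.

Definition embeds (lam mu : seq nat) : Prop :=
  exists phi : nat -> nat,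
    (forall i, i < size lam -> phi i < size mu) /\
    (forall j, j < size mu ->
       \sum_(i < size lam | phi i == j) nth 0 lam i <= nth 0 mu j).

Definition divisibility_chain (lam : seq nat) : Prop :=
  forall i j, j <= i -> i < size lam -> nth 0 lam i %| nth 0 lam j.

Definition used (lam : seq nat) (f : nat -> nat) (l j : nat) : nat :=
  \sum_(l' < l | f l' == j) nth 0 lam l'.

Definition remaining (lam mu : seq nat) (f : nat -> nat) (l j : nat) : nat :=
  nth 0 mu j - used lam f l j.

Definition valid_run (lam mu : seq nat) (f : nat -> nat) (i : nat) : Prop :=
  forall l, l < i ->
    f l < size mu /\ nth 0 lam l <= remaining lam mu f l (f l).

(* Main.v *)
Require Import Defs.
From mathcomp Require Import all_boot zify.

Lemma sum_sub_pred m n (P Q : pred nat) (F : nat -> nat) :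
  (forall i, P i -> Q i) ->
  \sum_(m <= i < n | P i) F i <= \sum_(m <= i < n | Q i) F i.
Proof.
move=> PQ; rewrite (big_mkcond P) (big_mkcond Q); apply: leq_sum => i _.
by case: (boolP (P i)) => Pi; [rewrite (PQ _ Pi)|].
Qed.

Lemma sum_or_le m n (P Q : pred nat) (F : nat -> nat) :
  \sum_(m <= i < n | P i || Q i) F i <=
  \sum_(m <= i < n | P i) F i + \sum_(m <= i < n | Q i) F i.
Proof.
rewrite (big_mkcond (fun i => P i || Q i)) (big_mkcond P) (big_mkcond Q).
rewrite -big_split; apply: leq_sum => i _.
by case: (P i); case: (Q i) => //=; rewrite leq_addr.
Qed.

Lemma dvd_step d x y : d %| x -> d %| y -> x < y -> x + d <= y.
Proof.
move=> /dvdnP [p ->] /dvdnP [q ->] H.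
case: d H => [|d] H; first by rewrite !muln0 in H.
have : p < q by rewrite ltn_pmul2r in H.
move=> pq; rewrite -mulSnr; exact: leq_mul.
Qed.

Lemma thresh (G : nat -> nat) n a : G 0 <= a ->
  (forall t, t < n -> G t < a -> G t.+1 <= a) ->
  exists t, t <= n /\ G t <= a /\ (t = n \/ G t = a).
Proof.
move=> G0; elim: n => [|n IH] Hs; first by exists 0; split=> //; split=> //; left.
have [t [tn [Gt [tE|Ga]]]] := IH (fun t tl => Hs t (ltnW tl)).
- subst t; case: (ltngtP (G n) a) => Gn.
  + exists n.+1; split=> //; split; [by apply: Hs|by left].
  + by rewrite ltnNge Gt in Gn.
  + by exists n; split=> //; split=> //; right.
- by exists t; split; [exact: ltnW|split=> //; right].
Qed.

Lemma shift1 n (P : pred nat) (F : nat -> nat) :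
  \sum_(i < n.-1 | P i.+1) F i.+1 = \sum_(1 <= l < n | P l) F l.
Proof.
have -> : \sum_(1 <= l < n | P l) F l = \sum_(0 + 1 <= l < n | P l) F l by [].
rewrite big_addn subn1 big_mkord; apply: eq_big => [i|i _]; by rewrite addn1.
Qed.

Lemma step lam mu k : divisibility_chain lam -> embeds lam mu ->
  0 < size lam -> k < size mu -> nth 0 lam 0 <= nth 0 mu k ->
  embeds (behead lam) (set_nth 0 mu k (nth 0 mu k - nth 0 lam 0)).
Proof.
move=> ch [phi [Hphi Hload]] n0 kmu ale.
pose n := size lam. pose a := nth 0 lam 0. pose m := phi 0.
have mmu : m < size mu := Hphi 0 n0.
pose G t := \sum_(1 <= l < n | (phi l == k) && (l < t)) nth 0 lam l.
have Gstep : forall t, t < n -> G t < a -> G t.+1 <= a.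
  move=> t tn Gta.
  have D1 : nth 0 lam t %| G t.
    by apply: dvdn_sum => l /andP[_ lt]; apply: ch (ltnW lt) tn.
  have D2 : nth 0 lam t %| a by apply: ch (leq0n t) tn.
  apply: (leq_trans _ (dvd_step _ _ _ D1 D2 Gta)).
  rewrite /G (bigID (fun l => l < t)) /=; apply: leq_add.
    by apply: sum_sub_pred => l /andP[/andP[-> _] ->].
  apply: leq_trans (sum_sub_pred _ _ _ (fun l => l == t) _ _) _.
    move=> l /andP[/andP[_ l1] l2]; apply/eqP; lia.
  by rewrite big_nat1_eq; case: ifP.
have G0 : G 0 <= a by rewrite /G big1 // => l /andP[_]; rewrite ltn0.
have [t [tn [Gt Hcase]]] := thresh _ _ _ G0 Gstep.
pose psi' l := if (phi l == k) && (l < t) then m else phi l.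
pose R j := \sum_(1 <= l < n | phi l == j) nth 0 lam l.
have O j : j < size mu -> (if m == j then a else 0) + R j <= nth 0 mu j.
  move=> jmu; move: (Hload j jmu); rewrite -(@big_mkord _ 0 addn n (fun i => phi i == j) (fun i => nth 0 lam i)) (big_ltn_cond n0) /=.
  by rewrite /m; case: ifP.
exists (fun i => psi' i.+1); split.
  move=> i; rewrite size_behead size_set_nth (maxn_idPr kmu) => ilt.
  have iln : i.+1 < n by rewrite /n; lia.
  by rewrite /psi'; case: ifP => _; [|apply: Hphi].
move=> j; rewrite size_set_nth (maxn_idPr kmu) => jmu.
rewrite (eq_bigr (fun i : 'I_ _ => nth 0 lam i.+1)); last by move=> i _; rewrite nth_behead.
rewrite size_behead (shift1 _ (fun l => psi' l == j) (fun l => nth 0 lam l)).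
rewrite nth_set_nth /=.
case: (eqVneq m k) => [mk|mk].
  rewrite (eq_bigl (fun l => phi l == j)); last first.
    by move=> l; rewrite /psi'; case: ifP => // /andP[/eqP -> _]; rewrite mk.
  have := O j jmu; rewrite -/(R j) mk; case: (eqVneq j k) => [->|jk].
    rewrite /a; lia.
  by rewrite add0n.
case: (eqVneq j k) => [->|jk].
  rewrite (eq_bigl (fun l => (phi l == k) && ~~ (l < t))); last first.
    by move=> l; rewrite /psi'; case E: (phi l == k); case: (l < t) => //=; rewrite ?E ?(negbTE mk).
  have := O k kmu; rewrite (negbTE mk) add0n /R (bigID (fun l => l < t)) /= -/(G t).
  case: Hcase => [tE|Ga].
    rewrite big_nat_cond big1; first by lia.
    move=> l /andP[/andP[_ ln] /andP[_ lt]]; exfalso; move: lt; rewrite tE /n; lia.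
  rewrite Ga /a /n; lia.
case: (eqVneq j m) => [jm|jm].
  apply: leq_trans (sum_sub_pred _ _ _ (fun l => ((phi l == k) && (l < t)) || (phi l == m)) _ _) _.
    by move=> l; rewrite /psi'; case: ifP => // _ /eqP ->; rewrite jm eqxx.
  apply: leq_trans (sum_or_le _ _ _ _ _) _.
  have := O j jmu; rewrite -/(G t) -/(R m) jm eqxx; lia.
rewrite (eq_bigl (fun l => phi l == j)); last first.
  move=> l; rewrite /psi'; case: ifP => // /andP[/eqP -> _].
  by rewrite eq_sym (negbTE jm) eq_sym (negbTE jk).
by have := O j jmu; rewrite eq_sym (negbTE jm).
Qed.

Lemma used_S lam f i j :
  used lam f i.+1 j = used lam f i j + (if f i == j then nth 0 lam i else 0).
Proof. by rewrite /used big_mkcond big_ord_recr /= [in RHS]big_mkcond. Qed.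

Lemma inv lam mu f : divisibility_chain lam -> embeds lam mu ->
  forall i, i <= size lam -> valid_run lam mu f i ->
  embeds (drop i lam) (mkseq (remaining lam mu f i) (size mu)).
Proof.
move=> ch emb; elim=> [|i IH] il vr.
  rewrite drop0 (eq_mkseq (g := nth 0 mu)) ?mkseq_nth //.
  by move=> j; rewrite /remaining /used big_ord0 subn0.
have vr' : valid_run lam mu f i by move=> l li; apply: vr; lia.
have [fi rfi] := vr i (ltnSn i).
have chi : divisibility_chain (drop i lam).
  by move=> x y yx; rewrite size_drop !nth_drop => xs; apply: ch; lia.
have sz : 0 < size (drop i lam) by rewrite size_drop; lia.
have fi' : f i < size (mkseq (remaining lam mu f i) (size mu)) by rewrite size_mkseq.
have rfi' : nth 0 (drop i lam) 0 <= nth 0 (mkseq (remaining lam mu f i) (size mu)) (f i).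
  by rewrite nth_drop addn0 nth_mkseq.
have H := step _ _ _ chi (IH (ltnW il) vr') sz fi' rfi'.
rewrite -drop1 drop_drop add1n in H.
suff E : set_nth 0 (mkseq (remaining lam mu f i) (size mu)) (f i)
    (nth 0 (mkseq (remaining lam mu f i) (size mu)) (f i) - nth 0 (drop i lam) 0)
  = mkseq (remaining lam mu f i.+1) (size mu) by rewrite -E.
apply: (@eq_from_nth _ 0); first by rewrite size_set_nth !size_mkseq (maxn_idPr fi).
rewrite size_set_nth size_mkseq (maxn_idPr fi) => j jmu.
rewrite nth_set_nth /= nth_drop addn0 !nth_mkseq // /remaining used_S.
case: (eqVneq j (f i)) => [->|jf]; first by rewrite subnDA.
by rewrite addn0.
Qed.

Theorem theorem3p1 (lam mu : seq nat) :
  is_partition lam -> is_partition mu ->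
  divisibility_chain lam ->
  embeds lam mu ->
  (* first fit never gets stuck, whatever valid choices were made *)
  (forall (i : nat) (f : nat -> nat), i < size lam -> valid_run lam mu f i ->
     exists2 j, j < size mu & nth 0 lam i <= remaining lam mu f i j)
  /\
  (* equivalent one-step form *)
  (0 < size lam ->
   forall k, k < size mu -> nth 0 lam 0 <= nth 0 mu k ->
     embeds (behead lam) (set_nth 0 mu k (nth 0 mu k - nth 0 lam 0))).
Proof.
move=> _ _ ch emb; split; last by move=> n0 k kmu ale; exact: step.
move=> i f il vr.
have [psi [Hs Hl]] := inv _ _ _ ch emb _ (ltnW il) vr.
have sz : 0 < size (drop i lam) by rewrite size_drop; lia.
have j0 := Hs 0 sz; rewrite size_mkseq in j0.
exists (psi 0) => //.
have jm : psi 0 < size (mkseq (remaining lam mu f i) (size mu)) by rewrite size_mkseq.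
have := Hl (psi 0) jm; rewrite nth_mkseq //.
rewrite -(@big_mkord _ 0 addn _ (fun x => psi x == psi 0) (fun x => nth 0 (drop i lam) x)).
rewrite (big_ltn_cond sz) eqxx nth_drop addn0 /= => H.
by apply: leq_trans H; exact: leq_addr.
Qed.
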